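(* Let $(A_n)_{n\ge1}$ be a sequence of nonnegative integer matrices, $A_n$ of size $f(n+1)\times f(n)$, such that each $A_n$ has all column sums equal, and such that the direct limit $G$ of $\mathbb Z^{f(1)}\xrightarrow{A_1}\mathbb Z^{f(2)}\xrightarrow{A_2}\cdots$ (with the induced ordering) is a simple non-cyclic dimension group. Then $G$ is globally irrationally miscible.
   Context: The direct limit is ordered by the union of the images of $\mathbb Z_+^{f(n)}$. A dimension group is simple if it has no nontrivial order ideals. For an order unit $u$, $S(G,u)$ is the set of states (homomorphisms $\sigma:G\to\mathbb R$, $\sigma(G^+)\ge0$, $\sigma(u)=1$); $J(G,u)=\{g:\sigma\mapsto\sigma(g)\text{ constant on }S(G,u)\}$ with $\Phi(g)$ the constant. $(G,u)$ is irrationally miscible if $\Phi(J(G,u))\subseteq\mathbb Q$; $G$ is globally irrationally miscible if this holds for every order unit $u$. *)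

(* Defs.v *)
From HB Require Import structures.
From mathcomp Require Import all_boot all_order all_algebra.
From mathcomp Require Export reals.
Set Implicit Arguments. Unset Strict Implicit. Unset Printing Implicit Defensive.
Import Order.TTheory GRing.Theory Num.Theory.
Local Open Scope ring_scope.

(* The direct limit G of Z^{f 0} --A 0--> Z^{f 1} --A 1--> ... is modelled
   as the group of eventually compatible sequences ("threads")
   g : forall m, Z^{f m}  (g (m+1) = A m g m for all large m),
   modulo eventual equality.  Elements of G are handled via representatives;
   every notion below is stated on threads and respects eventual equality. *)

Definition Thr (f : nat -> nat) := forall m : nat, 'cV[int]_(f m).

Section DirectLimit.
Variable (f : nat -> nat) (A : forall n : nat, 'M[int]_(f n.+1, f n)).

Definition thread (g : Thr f) : Prop :=
  exists n, forall m, (n <= m)%N -> g m.+1 = A m *m g m.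

Definition eqG (g h : Thr f) : Prop :=
  exists n, forall m, (n <= m)%N -> g m = h m.

Definition thr0 : Thr f := fun m => 0.
Definition thr_add (g h : Thr f) : Thr f := fun m => g m + h m.
Definition thr_opp (g : Thr f) : Thr f := fun m => - g m.
Definition thr_sub (g h : Thr f) : Thr f := fun m => g m - h m.
Definition thr_natmul (g : Thr f) (N : nat) : Thr f := fun m => g m *+ N.
Definition thr_intmul (g : Thr f) (z : int) : Thr f := fun m => g m *~ z.

(* positive cone of G: union of the images of Z_+^{f n} *)
Definition geq0 (g : Thr f) : Prop :=
  exists n, forall m, (n <= m)%N -> forall i, 0 <= g m i 0.

Definition leG (g h : Thr f) : Prop := geq0 (thr_sub h g).

Definition order_ideal (I : Thr f -> Prop) : Prop :=
  [/\ (forall g h, thread g -> thread h -> eqG g h -> I g -> I h),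
      I thr0,
      (forall g h, thread g -> thread h -> I g -> I h -> I (thr_sub g h)),
      (forall g, thread g -> I g ->
         (exists a b, [/\ thread a /\ thread b, I a /\ I b, geq0 a /\ geq0 b &
                         eqG g (thr_sub a b)])) &
      (forall a b, thread a -> thread b -> geq0 a -> leG a b -> I b -> I a)].

Definition simpleG : Prop :=
  forall I, order_ideal I ->
    (forall g, thread g -> I g -> eqG g thr0) \/ (forall g, thread g -> I g).

Definition cyclicG : Prop :=
  exists g, thread g /\
    forall h, thread h -> exists z : int, eqG h (thr_intmul g z).

Definition order_unit (u : Thr f) : Prop :=
  [/\ thread u, geq0 u &
      forall g, thread g -> exists N : nat, leG g (thr_natmul u N)].

Definition is_state (R : realType) (u : Thr f) (s : Thr f -> R) : Prop :=
  [/\ (forall g h, thread g -> thread h -> eqG g h -> s g = s h),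
      (forall g h, thread g -> thread h -> s (thr_add g h) = s g + s h),
      (forall g, thread g -> geq0 g -> 0 <= s g) &
      s u = 1].

Definition irrationally_miscible (R : realType) (u : Thr f) : Prop :=
  forall g, thread g -> forall c : R,
    (forall s, is_state u s -> s g = c) -> exists q : rat, c = ratr q.

Definition globally_irrationally_miscible (R : realType) : Prop :=
  forall u, order_unit u -> irrationally_miscible R u.

End DirectLimit.

(* Main.v *)
Require Import Defs.
From HB Require Import structures.
From mathcomp Require Import all_boot all_order all_algebra.
From mathcomp Require Import reals.
From Stdlib Require Import ClassicalEpsilon Classical.
Import Order.TTheory GRing.Theory Num.Theory.
Local Open Scope ring_scope.

Definition colsum (f : nat -> nat) (A : forall n : nat, 'M[int]_(f n.+1, f n)) n : int :=
  epsilon (inhabits 0) (fun c => 0 <= c /\ forall j, \sum_i A n i j = c).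

Definition good (f : nat -> nat) (A : forall n : nat, 'M[int]_(f n.+1, f n)) (g : Thr f) n :=
  forall m, (n <= m)%N -> g m.+1 = A m *m g m.

Definition idx (f : nat -> nat) (A : forall n : nat, 'M[int]_(f n.+1, f n)) (g : Thr f) : nat :=
  epsilon (inhabits 0%N) (@good f A g).

Definition Sm (f : nat -> nat) (g : Thr f) m : int := \sum_i g m i 0.

Definition Pm (f : nat -> nat) (A : forall n : nat, 'M[int]_(f n.+1, f n)) K m : rat :=
  \prod_(K <= k < m) (@colsum f A k)%:~R.

Definition sigm (f : nat -> nat) (A : forall n : nat, 'M[int]_(f n.+1, f n)) K g m : rat :=
  (@Sm f g m)%:~R / @Pm f A K m.

Definition sig (f : nat -> nat) (A : forall n : nat, 'M[int]_(f n.+1, f n)) K g : rat :=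
  @sigm f A K g (maxn (@idx f A g) K).

Lemma colsum_spec (f : nat -> nat) (A : forall n : nat, 'M[int]_(f n.+1, f n))
  (hA_nonneg : forall n i j, 0 <= A n i j)
  (hA_cols : forall n, exists c : int, forall j, \sum_i A n i j = c) n :
  0 <= @colsum f A n /\ forall j, \sum_i A n i j = @colsum f A n.
Proof.
apply: (epsilon_spec (inhabits 0) (fun c => 0 <= c /\ forall j, \sum_i A n i j = c)).
have [c hc] := hA_cols n.
case: (pickP (@predT 'I_(f n))) => [j _|H].
  exists c; split=> //; rewrite -(hc j); apply: sumr_ge0 => i _; exact: hA_nonneg.
by exists 0; split=> // j; have := H j.
Qed.

Lemma Sm_step (f : nat -> nat) (A : forall n : nat, 'M[int]_(f n.+1, f n))
  (hA_nonneg : forall n i j, 0 <= A n i j)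
  (hA_cols : forall n, exists c : int, forall j, \sum_i A n i j = c) m (v : 'cV[int]_(f m)) :
  \sum_i (A m *m v) i 0 = @colsum f A m * \sum_j v j 0.
Proof.
under eq_bigr do rewrite mxE.
rewrite exchange_big /= mulr_sumr; apply: eq_bigr => j _.
by rewrite -mulr_suml (proj2 (@colsum_spec f A hA_nonneg hA_cols m)).
Qed.

Lemma sigm_step (f : nat -> nat) (A : forall n : nat, 'M[int]_(f n.+1, f n))
  (hA_nonneg : forall n i j, 0 <= A n i j)
  (hA_cols : forall n, exists c : int, forall j, \sum_i A n i j = c) K
  (HK : forall k, (K <= k)%N -> @colsum f A k != 0) g m :
  (K <= m)%N -> g m.+1 = A m *m g m -> @sigm f A K g m.+1 = @sigm f A K g m.
Proof.
move=> Km gm.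
rewrite /sigm /Sm /Pm gm (@Sm_step f A hA_nonneg hA_cols) big_nat_recr //=.
have cn : ((@colsum f A m)%:~R : rat) != 0 by rewrite intr_eq0 HK.
set c := ((@colsum f A m)%:~R : rat); set P := \prod_(_ <= _ < _) _.
by rewrite intrM [P * c]mulrC invfM mulrACA mulfV // mul1r.
Qed.

Lemma sigm_stable (f : nat -> nat) (A : forall n : nat, 'M[int]_(f n.+1, f n))
  (hA_nonneg : forall n i j, 0 <= A n i j)
  (hA_cols : forall n, exists c : int, forall j, \sum_i A n i j = c) K
  (HK : forall k, (K <= k)%N -> @colsum f A k != 0) g n :
  @good f A g n -> forall m, (maxn n K <= m)%N ->
  @sigm f A K g m = @sigm f A K g (maxn n K).
Proof.
move=> gn m /subnK <-; elim: (m - _)%N => [|d IH] //=.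
rewrite addSn (@sigm_step f A hA_nonneg hA_cols K HK) //.
  by apply: leq_trans (leq_addl _ _); rewrite leq_maxr.
by apply: gn; apply: leq_trans (leq_addl _ _); rewrite leq_maxl.
Qed.

Lemma sig_spec (f : nat -> nat) (A : forall n : nat, 'M[int]_(f n.+1, f n))
  (hA_nonneg : forall n i j, 0 <= A n i j)
  (hA_cols : forall n, exists c : int, forall j, \sum_i A n i j = c) K
  (HK : forall k, (K <= k)%N -> @colsum f A k != 0) g :
  thread A g -> exists N, forall m, (N <= m)%N -> @sigm f A K g m = @sig f A K g.
Proof.
move=> tg; have gi : @good f A g (@idx f A g) by apply: epsilon_spec.
exists (maxn (@idx f A g) K) => m hm.
exact: (@sigm_stable f A hA_nonneg hA_cols K HK g _ gi).
Qed.

Lemma Pm_gt0 (f : nat -> nat) (A : forall n : nat, 'M[int]_(f n.+1, f n))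
  (hA_nonneg : forall n i j, 0 <= A n i j)
  (hA_cols : forall n, exists c : int, forall j, \sum_i A n i j = c) K
  (HK : forall k, (K <= k)%N -> @colsum f A k != 0) m : 0 < @Pm f A K m.
Proof.
rewrite /Pm big_nat_cond; apply: prodr_gt0 => k /andP[/andP[Kk _] _].
by rewrite ltr0z lt0r HK //= (proj1 (@colsum_spec f A hA_nonneg hA_cols k)).
Qed.

Lemma triv_cyc (f : nat -> nat) (A : forall n : nat, 'M[int]_(f n.+1, f n)) :
  (forall h, thread A h -> eqG h (thr0 f)) -> cyclicG A.
Proof.
move=> H; exists (thr0 f); split.
  by exists 0%N => m _; rewrite /thr0 mulmx0.
move=> h th; exists 0; have [N hN] := H h th; exists N => m /hN ->.
by rewrite /thr_intmul /thr0 mulr0z.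
Qed.

Theorem mainTheorem14 (R : realType) (f : nat -> nat)
  (A : forall n : nat, 'M[int]_(f n.+1, f n))
  (hA_nonneg : forall n i j, 0 <= A n i j)
  (hA_cols : forall n, exists c : int, forall j, \sum_i A n i j = c)
  (hsimple : simpleG A)
  (hnoncyc : ~ cyclicG A) :
  globally_irrationally_miscible A R.
Proof.
move=> u [tu gu ou] g tg c hc.
have triv : (forall h, thread A h -> eqG h (thr0 f)) -> False.
  by move=> H; apply: hnoncyc; exact: triv_cyc.
have [K HK] : exists K, forall k, (K <= k)%N -> @colsum f A k != 0.
  apply: NNPP => nK; apply: triv => h [N hN].
  have [k [Nk ck]] : exists k, (N <= k)%N /\ @colsum f A k = 0.
    apply: NNPP => nk; apply: nK; exists N => k Nk; apply/eqP => ck.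
    by apply: nk; exists k.
  have A0 : forall i j, A k i j = 0.
    move=> i j; have [c0 cs] := @colsum_spec f A hA_nonneg hA_cols k.
    have := cs j; rewrite ck => /psumr_eq0P; apply=> // i' _; exact: hA_nonneg.
  exists k.+1 => m /subnK <-; elim: (m - k.+1)%N => [|d IHd].
    rewrite add0n hN //; apply/matrixP => i j; rewrite /thr0 !mxE big1 // => l _.
    by rewrite A0 mul0r.
  rewrite addSn hN ?IHd ?mulmx0 //.
  by apply: leq_trans Nk _; apply: leq_trans (leq_addl _ _) ; apply: leqnSn.
have spec := @sig_spec f A hA_nonneg hA_cols K HK.
have Ppos := @Pm_gt0 f A hA_nonneg hA_cols K HK.
have sge0 : forall h, thread A h -> geq0 h -> 0 <= @sig f A K h.
  move=> h th [N hN]; have [M hM] := spec h th.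
  rewrite -(hM (maxn N M)) ?leq_maxr // /sigm; apply: divr_ge0; last exact: ltW.
  by rewrite ler0z; apply: sumr_ge0 => i _; apply: hN; rewrite leq_maxl.
have su : 0 < @sig f A K u.
  rewrite lt_def sge0 // andbT; apply/eqP => s0; apply: triv.
  have [N0 u0] : exists N, forall m, (N <= m)%N -> u m = 0.
    have [N hN] := gu; have [M hM] := spec u tu; exists (maxn N M) => m hm.
    have : @Sm f u m = 0.
      have := hM m (leq_trans (leq_maxr _ _) hm); rewrite s0 /sigm => /eqP.
      by rewrite mulf_eq0 invr_eq0 (gt_eqF (Ppos m)) orbF intr_eq0 => /eqP.
    move/psumr_eq0P => H; apply/matrixP => i j; rewrite (ord1 j) mxE; apply: H => // l _.
    by apply: hN; apply: leq_trans hm; rewrite leq_maxl.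
  move=> h th.
  have thopp : thread A (thr_opp h).
    by have [N hN] := th; exists N => m hm; rewrite /thr_opp hN // mulmxN.
  have [N1 [N1' h1]] := ou h th.
  have [N2 [N2' h2]] := ou _ thopp.
  exists (maxn N0 (maxn N1' N2')) => m hm.
  have hm0 : (N0 <= m)%N by apply: leq_trans hm; rewrite leq_maxl.
  have hm1 : (N1' <= m)%N by apply: leq_trans hm; rewrite leq_max leq_maxl orbT.
  have hm2 : (N2' <= m)%N by apply: leq_trans hm; rewrite leq_max leq_maxr orbT.
  apply/matrixP => i j; rewrite (ord1 j) /thr0 mxE.
  have := h1 m hm1 i; have := h2 m hm2 i.
  rewrite /thr_sub /thr_natmul /thr_opp u0 // !mul0rn !sub0r !mxE opprK.
  by move=> a b; apply/eqP; rewrite eq_le -oppr_ge0 a b.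
pose s := fun h => (ratr (@sig f A K h / @sig f A K u) : R).
have st : is_state A u s.
  split.
  - move=> h1 h2 t1 t2 [N hN]; rewrite /s; congr (ratr (_ / _)).
    have [M1 e1] := spec _ t1; have [M2 e2] := spec _ t2.
    have hm1 : (M1 <= maxn N (maxn M1 M2))%N by rewrite leq_max leq_maxl orbT.
    have hm2 : (M2 <= maxn N (maxn M1 M2))%N by rewrite leq_max leq_maxr orbT.
    by rewrite -(e1 _ hm1) -(e2 _ hm2) /sigm /Sm hN // leq_maxl.
  - move=> h1 h2 t1 t2.
    have t12 : thread A (thr_add h1 h2).
      have [N1 hN1] := t1; have [N2 hN2] := t2; exists (maxn N1 N2) => m hm.
      rewrite /thr_add hN1 ?hN2 ?mulmxDr //; apply: leq_trans hm.
        by rewrite leq_maxr.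
      by rewrite leq_maxl.
    have [M1 e1] := spec _ t1; have [M2 e2] := spec _ t2; have [M e] := spec _ t12.
    set m := maxn M (maxn M1 M2).
    have hm1 : (M1 <= m)%N by rewrite leq_max leq_maxl orbT.
    have hm2 : (M2 <= m)%N by rewrite leq_max leq_maxr orbT.
    rewrite /s -rmorphD -mulrDl -(e1 _ hm1) -(e2 _ hm2) -(e m) ?leq_maxl //.
    rewrite /sigm /Sm /thr_add -mulrDl -intrD; congr (ratr ((_ : int)%:~R / _ / _)).
    by rewrite -big_split; apply: eq_bigr => i _; rewrite mxE.
  - by move=> h th gh; rewrite /s ler0q divr_ge0 ?sge0 // ltW.
  - by rewrite /s divff ?gt_eqF // rmorph1.
exists (@sig f A K g / @sig f A K u).
by rewrite -(hc s st).
Qed.
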